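(* Let $r\ge1$, $p_n\in[0,1]$, $L\ge1$, and $\mathbf s_1,\dots,\mathbf s_L\in V(G_n)_r$ with $a=|\bigcup_{j=1}^L\bar{\mathbf s}_j|$, and assume $\bar{\mathbf s}_i\cap\bigcup_{j\ne i}\bar{\mathbf s}_j\ne\emptyset$ for all $1\le i\le L$. Then $$\big|\mathbb E[Z_{\mathbf s_1}Z_{\mathbf s_2}\cdots Z_{\mathbf s_L}]-p_n^a\big|\le(2^L-1)p_n^{a+1}.$$ Moreover, for $L=2$, $\mathbb E[Z_{\mathbf s_1}Z_{\mathbf s_2}]\ge p_n^a(1-p_n)\ge0$.
   Context: $V(G_n)$ is a finite vertex set; $V(G_n)_r$ is the set of $r$-tuples of distinct elements, $\bar{\mathbf s}$ the set of entries of $\mathbf s$. $\{X_v\}_{v\in V(G_n)}$ are i.i.d. Bernoulli$(p_n)$, $X_{\mathbf s}=\prod_{u=1}^rX_{s_u}$, $Z_{\mathbf s}=X_{\mathbf s}-p_n^r$. *)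

(* Defs.v *)
From HB Require Import structures.
From mathcomp Require Import all_boot all_order all_algebra.
Set Implicit Arguments. Unset Strict Implicit. Unset Printing Implicit Defensive.
Import Order.TTheory GRing.Theory Num.Theory.
Local Open Scope ring_scope.

(* Probability space for i.i.d. Bernoulli(p) variables {X_v}_{v in V}:
   outcomes are configurations w : {ffun V -> bool}, X_v(w) = w v,
   with probability prod_v (p if w v else 1 - p). *)
Definition bern_weight (R : ringType) (V : finType) (p : R)
  (w : {ffun V -> bool}) : R :=
  \prod_(v : V) (if w v then p else 1 - p).

Definition Expect (R : ringType) (V : finType) (p : R)
  (F : {ffun V -> bool} -> R) : R :=
  \sum_(w : {ffun V -> bool}) bern_weight p w * F w.

Definition Xv (R : ringType) (V : finType) (w : {ffun V -> bool}) (v : V) : R :=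
  (w v)%:R.

Definition Xs (R : ringType) (V : finType) (r : nat) (w : {ffun V -> bool})
  (s : r.-tuple V) : R :=
  \prod_(u < r) Xv R w (tnth s u).

Definition Zs (R : ringType) (V : finType) (r : nat) (p : R)
  (w : {ffun V -> bool}) (s : r.-tuple V) : R :=
  Xs R w s - p ^+ r.

Definition sbar (V : finType) (r : nat) (s : r.-tuple V) : {set V} :=
  [set x in s].

(* Main.v *)
Require Import Defs.
From HB Require Import structures.
From mathcomp Require Import all_boot all_order all_algebra.
From mathcomp Require Import zify ring lra.
Import Order.TTheory GRing.Theory Num.Theory.
Local Open Scope ring_scope.
Set Implicit Arguments.

Section Aux.
Variables (R : realFieldType) (V : finType).

Definition XS (w : {ffun V -> bool}) (S : {set V}) : R := ([forall v in S, w v])%:R.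

Lemma prod_natb (I : finType) (P : pred I) (b : I -> bool) :
  \prod_(i | P i) ((b i)%:R : R) = ([forall (i | P i), b i])%:R.
Proof.
case: forallP => H.
  by rewrite big1 // => i Pi; move: (H i); rewrite Pi /= => ->.
have [i Pi nbi] : exists2 i, P i & ~~ b i.
  apply/exists_inP; apply/negP => /exists_inP H2; apply: H => i.
  by apply/implyP => Pi; apply/negPn/negP => nb; apply: H2; exists i.
by rewrite (bigD1 i) //= (negbTE nbi) mul0r.
Qed.

Lemma XS_U w A B : XS w (A :|: B) = XS w A * XS w B.
Proof.
rewrite /XS -natrM mulnb; congr (nat_of_bool _)%:R.
apply/idP/idP.
  move/forall_inP => H; apply/andP; split; apply/forall_inP => v Hv;
  by apply: H; rewrite inE Hv ?orbT.
by case/andP => /forall_inP H1 /forall_inP H2; apply/forall_inP => v;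
  rewrite inE => /orP [] ?; [apply: H1 | apply: H2].
Qed.

Lemma XS0 w : XS w set0 = 1.
Proof. by rewrite /XS; case: forall_inP => // H; exfalso; apply: H => v; rewrite inE. Qed.

Lemma Expect_XS (p : R) S : Expect p (fun w => XS w S) = p ^+ #|S|.
Proof.
rewrite /Expect.
have E w : bern_weight p w * XS w S = \prod_v ((if w v then p else 1 - p) * (if v \in S then ((w v)%:R : R) else 1)).
  rewrite /XS -(@prod_natb _ (fun v => v \in S) (fun v => w v)) big_split /=; congr (_ * _).
  by rewrite big_mkcond.
under eq_bigr => w _ do rewrite E.
rewrite -(bigA_distr_bigA (fun v (b : bool) => (if b then p else 1 - p) * (if v \in S then (b%:R : R) else 1))).
under eq_bigr => v _.
  rewrite big_bool /=.
over.
rewrite (bigID (fun v => v \in S)) /=.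
rewrite [X in _ * X]big1; last by move=> v /negbTE ->; rewrite !mulr1 addrC subrK.
rewrite mulr1 -prodr_const; apply: eq_bigr => v ->; rewrite mulr1 mulr0 addr0 //.
Qed.

Lemma Expect_sum (I : finType) (p : R) (G : I -> {ffun V -> bool} -> R) :
  Expect p (fun w => \sum_i G i w) = \sum_i Expect p (G i).
Proof.
rewrite /Expect exchange_big /=; apply: eq_bigr => w _; by rewrite mulr_sumr.
Qed.

Lemma Expect_add (p : R) (F G : {ffun V -> bool} -> R) :
  Expect p (fun w => F w + G w) = Expect p F + Expect p G.
Proof. rewrite /Expect -big_split; apply: eq_bigr => w _ /=; by rewrite mulrDr. Qed.

Lemma Expect_scale (p c : R) (F : {ffun V -> bool} -> R) : Expect p (fun w => c * F w) = c * Expect p F.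
Proof. rewrite /Expect mulr_sumr; apply: eq_bigr => w _; by rewrite mulrCA. Qed.

Lemma Xs_XS r w (s : r.-tuple V) : Xs R w s = XS w (sbar s).
Proof.
rewrite /Xs /Xv /XS -[(\prod_(u < r) _)]/(\prod_(u < r | true) ((w (tnth s u))%:R : R)).
rewrite prod_natb; congr (nat_of_bool _)%:R.
apply/forallP/forall_inP => H v.
  rewrite inE => /tnthP [u ->]; exact: (implyP (H u) isT).
apply/implyP => _; apply: H; rewrite inE; apply/tnthP; by exists v.
Qed.

End Aux.

Section Comb.
Local Open Scope nat_scope.
Variable V : finType.

Lemma card_bigcup_le (I : finType) (P : pred I) (S : I -> {set V}) :
  #|\bigcup_(j | P j) S j| <= \sum_(j | P j) #|S j|.
Proof.
apply: (big_ind2 (fun (A : {set V}) n => #|A| <= n)) => //.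
- by rewrite cards0.
- move=> A1 n1 A2 n2 h1 h2; rewrite cardsU; apply: leq_trans (leq_subr _ _) _.
  exact: leq_add.
Qed.

Lemma comb (L r : nat) (S : 'I_L -> {set V}) (f : {ffun 'I_L -> bool}) (i : 'I_L) :
  (forall j, #|S j| = r) ->
  (forall i : 'I_L, S i :&: (\bigcup_(j | j != i) S j) != set0) ->
  ~~ f i ->
  (#|\bigcup_(j < L) S j|).+1 <= r * #|[set j | ~~ f j]| + #|\bigcup_(j | f j) S j|.
Proof.
move=> hr hov nfi.
set A := \bigcup_(j | f j) S j.
set B := \bigcup_(j | ~~ f j && (j != i)) S j.
have [x] := set0Pn _ (hov i); rewrite inE => /andP [xi /bigcupP [j nji xj]].
have sub : \bigcup_(j < L) S j \subset S i :|: (A :|: B).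
  apply/subsetP => y /bigcupP [k _ yk].
  have [eki|nki] := eqVneq k i; first by rewrite inE -eki yk.
  case fk : (f k); rewrite !inE.
    by rewrite (_ : y \in A) ?orbT //; apply/bigcupP; exists k; rewrite ?fk.
  by rewrite (_ : y \in B) ?orbT //; apply/bigcupP; exists k; rewrite ?fk ?nki.
have xAB : x \in S i :&: (A :|: B).
  rewrite !inE xi /=; case fj : (f j).
    by rewrite (_ : x \in A) //; apply/bigcupP; exists j; rewrite ?fj.
  by rewrite (_ : x \in B) ?orbT //; apply/bigcupP; exists j; rewrite ?fj ?nji.
have h1 := subset_leq_card sub.
have h2 := cardsU (S i) (A :|: B).
have h3 : 0 < #|S i :&: (A :|: B)| by apply/card_gt0P; exists x.
have h4 := cardsU A B.
have h5 : #|B| <= r * #|[set j | ~~ f j && (j != i)]|.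
  have := @card_bigcup_le _ (fun j => ~~ f j && (j != i)) S. move=> /leq_trans; apply.
  rewrite (eq_bigr (fun _ => r)) ?sum_nat_const; last by move=> k _; rewrite hr.
  by rewrite mulnC cardsE.
have h6 : #|[set j | ~~ f j]| = (#|[set j | ~~ f j && (j != i)]|).+1.
  rewrite (cardsD1 i) inE nfi; congr (_.+1); apply: eq_card => k; rewrite !inE andbC.
  by case: (f k); case: eqP.
have h7 := subset_leq_card (subsetIl (S i) (A :|: B)).
rewrite h6 mulnS; move: (hr i) h1 h2 h3 h4 h5 h7; lia.
Qed.
End Comb.

Unset Implicit Arguments.

Theorem lemma4p1 (R : realFieldType) (V : finType) (r L : nat) (p : R)
  (s : 'I_L -> r.-tuple V) :
  (1 <= r)%N -> 0 <= p <= 1 -> (1 <= L)%N ->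
  (forall j, uniq (s j)) ->
  (forall i : 'I_L,
     sbar (s i) :&: (\bigcup_(j | j != i) sbar (s j)) != set0) ->
  let a := #|\bigcup_(j < L) sbar (s j)| in
  `| Expect p (fun w => \prod_(j < L) Zs p w (s j)) - p ^+ a |
     <= (2 ^ L - 1)%:R * p ^+ a.+1
  /\ (L = 2%N ->
      p ^+ a * (1 - p) <= Expect p (fun w => \prod_(j < L) Zs p w (s j))
      /\ 0 <= p ^+ a * (1 - p)).
Proof.
move=> hr hp hL huniq hov a.
have [p0 p1] := andP hp.
pose S := fun j => sbar (s j).
have hS : forall j, #|S j| = r.
  move=> j; rewrite /S /sbar cardsE; move/card_uniqP: (huniq j) => ->.
  by rewrite size_tuple.
have E1 w : \prod_(j < L) Zs p w (s j) =
    \sum_(f : {ffun 'I_L -> bool})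
       (- p ^+ r) ^+ #|[set j | ~~ f j]| * XS R w (\bigcup_(j | f j) S j).
  rewrite (eq_bigr (fun j => \sum_(b : bool) (if b then XS R w (S j) else - p ^+ r))); last first.
    by move=> j _; rewrite big_bool /Zs Xs_XS.
  rewrite bigA_distr_bigA; apply: eq_bigr => f _.
  rewrite (bigID (fun j => f j)) /= mulrC; congr (_ * _).
    rewrite (eq_bigr (fun _ => - p ^+ r)); last by move=> j /negbTE ->.
    by rewrite prodr_const cardsE.
  rewrite (big_morph (XS R w) (@XS_U R V w) (@XS0 R V w)).
  by apply: eq_bigr => j ->.
have key : Expect p (fun w => \prod_(j < L) Zs p w (s j)) =
    \sum_(f : {ffun 'I_L -> bool})
       (- p ^+ r) ^+ #|[set j | ~~ f j]| * p ^+ #|\bigcup_(j | f j) S j|.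
  transitivity (Expect p (fun w => \sum_(f : {ffun 'I_L -> bool})
       (- p ^+ r) ^+ #|[set j | ~~ f j]| * XS R w (\bigcup_(j | f j) S j))).
    by rewrite /Expect; apply: eq_bigr => w _; rewrite E1.
  rewrite Expect_sum; apply: eq_bigr => f _.
  by rewrite Expect_scale Expect_XS.
have bnd : forall f : {ffun 'I_L -> bool}, f != [ffun=> true] ->
    `|(- p ^+ r) ^+ #|[set j | ~~ f j]| * p ^+ #|\bigcup_(j | f j) S j| | <= p ^+ a.+1.
  move=> f nf.
  have [i nfi] : exists i, ~~ f i.
    apply/existsP; apply: contraR nf => /existsPn H; apply/eqP/ffunP => i.
    by rewrite ffunE; move: (H i); rewrite negbK.
  have hc := @comb _ _ _ S f i hS hov nfi.
  rewrite normrM normrX normrN !normrX ger0_norm // -exprM -exprD.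
  exact: ler_wiXn2l.
split.
  rewrite key (bigD1 [ffun=> true]) //=.
  have -> : #|[set j | ~~ ([ffun=> true] : {ffun 'I_L -> bool}) j]| = 0%N.
    by apply: eq_card0 => j; rewrite !inE ffunE.
  rewrite expr0 mul1r.
  have -> : \bigcup_(j | ([ffun=> true] : {ffun 'I_L -> bool}) j) S j = \bigcup_(j < L) S j.
    by apply: eq_bigl => j; rewrite ffunE.
  rewrite -/a addrC addrK.
  apply: le_trans (ler_norm_sum _ _ _) _.
  apply: (le_trans (y := \sum_(f : {ffun 'I_L -> bool} | f != [ffun=> true]) p ^+ a.+1)).
    by apply: ler_sum => f nf; apply: bnd.
  rewrite (eq_bigl (fun f => f \in predC1 [ffun=> true])) // sumr_const cardC1.
  rewrite card_ffun card_bool card_ord mulr_natl subn1.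
  done.
move=> L2; split; last by apply: mulr_ge0; [exact: exprn_ge0 | rewrite subr_ge0].
subst L.
set j0 : 'I_2 := ord0.
set j1 : 'I_2 := lift ord0 ord0.
have Ua : a = #|S j0 :|: S j1| by rewrite /a big_ord_recl big_ord1.
have ha : (a.+1 <= r + r)%N.
  have := @comb _ _ _ S [ffun=> false] j0 hS hov.
  rewrite ffunE => /(_ isT).
  have -> : #|[set j | ~~ ([ffun=> false] : {ffun 'I_2 -> bool}) j]| = 2%N.
    by rewrite -[RHS](card_ord 2); apply: eq_card => j; rewrite !inE ffunE.
  rewrite big_pred0; last by move=> j; rewrite ffunE.
  by rewrite cards0 addn0 -/a mulnC mul2n -addnn.
have E2 w : \prod_(j < 2) Zs p w (s j) =
   XS R w (S j0 :|: S j1) + (- p ^+ r) * XS R w (S j0) + (- p ^+ r) * XS R w (S j1)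
   + p ^+ r * p ^+ r * XS R w set0.
  rewrite big_ord_recl big_ord1 /Zs !Xs_XS XS_U XS0 -/j0 -/j1.
  rewrite /S; ring.
have -> : Expect p (fun w => \prod_(j < 2) Zs p w (s j)) = p ^+ a - p ^+ (r + r).
  transitivity (Expect p (fun w => XS R w (S j0 :|: S j1) + (- p ^+ r) * XS R w (S j0) + (- p ^+ r) * XS R w (S j1)
   + p ^+ r * p ^+ r * XS R w set0)).
    by rewrite /Expect; apply: eq_bigr => w _; rewrite E2.
  rewrite !Expect_add !Expect_scale !Expect_XS !hS cards0 -Ua exprD; ring.
have : p ^+ (r + r) <= p ^+ a.+1 by apply: ler_wiXn2l.
rewrite exprS => h.
have : 0 <= p ^+ a by exact: exprn_ge0.
nra.
Qed.
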